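(* Let $\lambda$ be a nonzero real number and $n$ a positive integer. Then $$\beta_{n-1,-\lambda}(2\lambda+1)=\sum_{k=1}^{n}(k-1)!\,(-1)^{n-k}H_{k,-\lambda}\,S_{2,\lambda}(n,k).$$
   Context: For a nonzero real parameter $\mu$ (used here with $\mu=\lambda$ and $\mu=-\lambda$), real $y$ and integer $k\ge0$: $(y)_{0,\mu}=1$, $(y)_{k,\mu}=y(y-\mu)\cdots(y-(k-1)\mu)$; $(y)_0=1$, $(y)_k=y(y-1)\cdots(y-k+1)$. The degenerate exponential is $e_\mu^x(t)=\sum_{k\ge0}(x)_{k,\mu}t^k/k!=(1+\mu t)^{x/\mu}$, $e_\mu(t)=e^1_\mu(t)$. The degenerate Bernoulli polynomials are defined by $\frac{t}{e_\mu(t)-1}e_\mu^x(t)=\sum_{n\ge0}\beta_{n,\mu}(x)\frac{t^n}{n!}$. The degenerate Stirling numbers of the second kind $S_{2,\mu}(n,k)$ are defined by $(x)_{n,\mu}=\sum_{k=0}^{n}S_{2,\mu}(n,k)(x)_{k}$ ($n\ge0$). The degenerate harmonic numbers are $H_{0,\mu}=0$ and $H_{n,\mu}=\sum_{k=1}^{n}\frac{1}{\mu}\binom{\mu}{k}(-1)^{k-1}$ for $n\ge1$. *)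

(* Defs.v *)
From mathcomp Require Import all_boot all_order all_algebra.
From mathcomp Require Import reals.
Set Implicit Arguments. Unset Strict Implicit. Unset Printing Implicit Defensive.
Import Order.TTheory GRing.Theory Num.Theory.
Local Open Scope ring_scope.

Section Deg.
Variable R : realType.

Definition dfall (y mu : R) (k : nat) : R := \prod_(i < k) (y - i%:R * mu).

Definition fall (y : R) (k : nat) : R := \prod_(i < k) (y - i%:R).

Definition rbinom (y : R) (k : nat) : R := fall y k / k`!%:R.

(* Formal power series are coefficient sequences nat -> R. *)
Definition fps_mul (a b : nat -> R) (n : nat) : R :=
  \sum_(i < n.+1) a i * b (n - i)%N.

(* first n+1 coefficients of the formal inverse of a (a 0 <> 0) *)
Fixpoint fps_inv_upto (a : nat -> R) (n : nat) : seq R :=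
  match n with
  | 0 => [:: (a 0%N)^-1]
  | m.+1 => let s := fps_inv_upto a m in
      rcons s (- (a 0%N)^-1 * \sum_(k < m.+1) a k.+1 * nth 0 s (m - k)%N)
  end.

Definition fps_inv (a : nat -> R) (n : nat) : R := nth 0 (fps_inv_upto a n) n.

(* coefficients of e_mu^x(t) = sum_k (x)_{k,mu} t^k / k! *)
Definition edeg (mu x : R) (k : nat) : R := dfall x mu k / k`!%:R.

(* coefficients of (e_mu(t) - 1) / t *)
Definition edeg1_div_t (mu : R) (k : nat) : R := edeg mu 1 k.+1.

(* degenerate Bernoulli polynomials:
   t/(e_mu(t)-1) e_mu^x(t) = sum_n beta_{n,mu}(x) t^n / n!  (formal power series) *)
Definition dbern (mu x : R) (n : nat) : R :=
  n`!%:R * fps_mul (fps_inv (edeg1_div_t mu)) (edeg mu x) n.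

Definition dharm (mu : R) (n : nat) : R :=
  \sum_(1 <= k < n.+1) mu^-1 * rbinom mu k * (-1) ^+ (k.-1).

End Deg.

(* Main.v *)
Require Import Defs.
From mathcomp Require Import all_boot all_order all_algebra.
From mathcomp Require Import reals.
From mathcomp Require Import ring.
Import Order.TTheory GRing.Theory Num.Theory.
Set Implicit Arguments. Unset Strict Implicit. Unset Printing Implicit Defensive.
Local Open Scope ring_scope.
Section Basic.
Variable R : realType.

Lemma dfallS (y mu : R) n : dfall y mu n.+1 = dfall y mu n * (y - n%:R * mu).
Proof. by rewrite /dfall big_ord_recr. Qed.
Lemma dfall0 (y mu : R) : dfall y mu 0 = 1.
Proof. by rewrite /dfall big_ord0. Qed.

Lemma vandermonde (x y mu : R) n :
  dfall (x + y) mu n = \sum_(i < n.+1) 'C(n, i)%:R * dfall x mu i * dfall y mu (n - i).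
Proof.
elim: n => [|n IH].
  by rewrite big_ord_recl big_ord0 !dfall0 addr0 bin0 !mul1r.
have step : forall i : 'I_n.+1, 'C(n, i)%:R * dfall x mu i * dfall y mu (n - i) * (x + y - n%:R * mu) =
   'C(n, i)%:R * dfall x mu i.+1 * dfall y mu (n - i)%N + 'C(n, i)%:R * dfall x mu i * dfall y mu (n - i).+1.
  move=> [i hi] /=; rewrite !dfallS.
  have hi' : (i <= n)%N by [].
  rewrite (natrB _ hi').
  ring.
rewrite dfallS IH mulr_suml (eq_bigr _ (fun i _ => step i)) big_split /=.
rewrite [in RHS]big_ord_recl /= bin0 subn0 mul1r.
rewrite /bump.
under [in RHS]eq_bigr => i _ do rewrite add1n binS natrD mulrDl mulrDl subSS.
rewrite big_split /= addrA [LHS]addrC; congr (_ + _).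
rewrite [in LHS]big_ord_recl /= bin0 subn0 mul1r dfall0 mul1r; congr (_ + _).
rewrite [in RHS]big_ord_recr /= bin_small // mul0r mul0r addr0.
apply: eq_bigr => i _; rewrite /bump add1n.
by rewrite subnSK.
Qed.
Lemma fallS (y : R) n : fall y n.+1 = fall y n * (y - n%:R).
Proof. by rewrite /fall big_ord_recr. Qed.

Lemma fall0 (y : R) : fall y 0 = 1.
Proof. by rewrite /fall big_ord0. Qed.

Lemma fallSl (y : R) n : fall y n.+1 = y * fall (y - 1) n.
Proof.
rewrite /fall big_ord_recl /= subr0; congr (_ * _); apply: eq_bigr => i _.
rewrite /bump /=; rewrite -addn1 natrD; ring.
Qed.

Lemma fall_shift (x : R) k : fall (x + 1) k.+1 = fall x k.+1 + k.+1%:R * fall x k.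
Proof.
rewrite fallSl addrK fallS -addn1 natrD; ring.
Qed.

Lemma fall_nat (n j : nat) : fall (n%:R : R) j = (n ^_ j)%:R.
Proof.
elim: j => [|j IH]; first by rewrite fall0 ffactn0.
rewrite fallS IH ffactnSr natrM.
case: (leqP j n) => hj; first by rewrite natrB.
by rewrite ffact_small // !mul0r.
Qed.

Lemma fall_indep N (c : nat -> R) :
  (forall x : R, \sum_(k < N) c k * fall x k = 0) -> forall k, (k < N)%N -> c k = 0.
Proof.
move=> H k; elim/ltn_ind: k => k IH hk.
have := H k%:R.
rewrite (bigD1 (Ordinal hk)) //= big1 ?addr0.
  rewrite fall_nat ffactnn => /eqP; rewrite mulf_eq0 pnatr_eq0 => /orP [/eqP //|].
  by rewrite eqn0Ngt fact_gt0.
move=> [j hj] /= hne; rewrite fall_nat.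
case: (ltngtP j k) => hjk.
- by rewrite IH ?mul0r.
- by rewrite ffact_small // mulr0.
- by move: hne; rewrite -(inj_eq val_inj) /= hjk eqxx.
Qed.

Lemma dfall0S (mu : R) n : dfall 0 mu n.+1 = 0.
Proof. by rewrite /dfall big_ord_recl /= mul0r subr0 mul0r. Qed.

Lemma sum_ext K n (f : nat -> R) : (n < K)%N -> (forall k, (n < k)%N -> f k = 0) ->
  \sum_(k < K) f k = \sum_(k < n.+1) f k.
Proof.
move=> hK hf; rewrite (big_ord_widen K f hK) [RHS]big_mkcond /=.
apply: eq_bigr => i _; case: ifP => // /negbT; rewrite -leqNgt => h.
by rewrite hf.
Qed.
End Basic.

Section Poly.
Variable R : realType.
Variable N : nat.

Definition eqN (p q : {poly R}) := forall i, (i < N)%N -> p`_i = q`_i.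

Lemma eqN_refl p : eqN p p. Proof. by []. Qed.
Lemma eqN_eq p q : p = q -> eqN p q. Proof. by move=> ->. Qed.
Lemma eqN_sym p q : eqN p q -> eqN q p. Proof. by move=> h i hi; rewrite h. Qed.
Lemma eqN_trans p q r : eqN p q -> eqN q r -> eqN p r.
Proof. by move=> h1 h2 i hi; rewrite h1 // h2. Qed.
Lemma eqN_add p q r s : eqN p q -> eqN r s -> eqN (p + r) (q + s).
Proof. by move=> h1 h2 i hi; rewrite !coefD h1 // h2. Qed.
Lemma eqN_opp p q : eqN p q -> eqN (- p) (- q).
Proof. by move=> h i hi; rewrite !coefN h. Qed.
Lemma eqN_mul p q r s : eqN p q -> eqN r s -> eqN (p * r) (q * s).
Proof.
move=> h1 h2 i hi; rewrite !coefM; apply: eq_bigr => [[j hj]] _ /=.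
rewrite h1 ?h2 //; first exact: leq_ltn_trans (leq_subr _ _) hi.
by apply: leq_ltn_trans hi; rewrite -ltnS.
Qed.

Definition egf (a : nat -> R) : {poly R} := \poly_(i < N) (a i / i`!%:R).

Lemma fact_neq0 n : n`!%:R != 0 :> R.
Proof. by rewrite pnatr_eq0 -lt0n fact_gt0. Qed.

Lemma coef_egfM a b n : (n < N)%N ->
  (egf a * egf b)`_n = (\sum_(i < n.+1) 'C(n, i)%:R * a i * b (n - i)%N) / n`!%:R.
Proof.
move=> hn; rewrite coefM mulr_suml; apply: eq_bigr => [[i hi]] _ /=.
rewrite !coef_poly.
have h1 : (i < N)%N by apply: leq_ltn_trans hn; rewrite -ltnS.
have h2 : (n - i < N)%N by exact: leq_ltn_trans (leq_subr _ _) hn.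
rewrite h1 h2.
have hb := bin_fact (hi : (i <= n)%N).
have -> : n`!%:R = 'C(n, i)%:R * (i`!%:R * (n - i)`!%:R) :> R by rewrite -!natrM hb.
have := fact_neq0 i; have := fact_neq0 (n - i).
have hC : 'C(n, i)%:R != 0 :> R by rewrite pnatr_eq0 -lt0n bin_gt0.
move=> h3 h4; field.
by rewrite hC h3 h4.
Qed.

End Poly.

Section Inv.
Variable R : realType.

Definition trp N (f : nat -> R) : {poly R} := \poly_(i < N) f i.

Lemma fps_mul_poly N (f g : nat -> R) j : (j < N)%N -> fps_mul f g j = (trp N f * trp N g)`_j.
Proof.
move=> hj; rewrite /fps_mul coefM; apply: eq_bigr => [[i hi]] _ /=.
rewrite !coef_poly.
have h1 : (i < N)%N by apply: leq_ltn_trans hj; rewrite -ltnS.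
have h2 : (j - i < N)%N by exact: leq_ltn_trans (leq_subr _ _) hj.
by rewrite h1 h2.
Qed.

Lemma fps_mul_comm (f g : nat -> R) j : fps_mul f g j = fps_mul g f j.
Proof. by rewrite !(@fps_mul_poly j.+1) // mulrC. Qed.

Lemma inv_upto_size (a : nat -> R) n : size (fps_inv_upto a n) = n.+1.
Proof. by elim: n => [|n IH] //=; rewrite size_rcons IH. Qed.

Lemma inv_upto_nth (a : nat -> R) n j : (j <= n)%N -> nth 0 (fps_inv_upto a n) j = fps_inv a j.
Proof.
elim: n j => [|n IH] j hj.
  by move: hj; rewrite leqn0 => /eqP ->.
case: (ltnP j n.+1) => hjn.
  by rewrite /= nth_rcons inv_upto_size hjn IH.
have -> : j = n.+1 by apply/eqP; rewrite eqn_leq hj hjn.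
by [].
Qed.

Lemma fps_inv_S (a : nat -> R) m :
  fps_inv a m.+1 = - (a 0%N)^-1 * \sum_(k < m.+1) a k.+1 * fps_inv a (m - k).
Proof.
rewrite {1}/fps_inv /= nth_rcons inv_upto_size ltnn eqxx; congr (_ * _).
by apply: eq_bigr => k _; rewrite inv_upto_nth // leq_subr.
Qed.

Lemma fps_mul_inv (a : nat -> R) j : a 0%N != 0 -> fps_mul a (fps_inv a) j = (j == 0%N)%:R.
Proof.
move=> ha; case: j => [|m].
  by rewrite /fps_mul big_ord_recl big_ord0 addr0 /fps_inv /= mulfV.
rewrite /fps_mul big_ord_recl /= subn0 fps_inv_S.
under eq_bigr => i _ do rewrite /bump /= add1n subSS.
by rewrite mulrA mulrN mulfV // mulN1r addNr.
Qed.

Lemma inv_solve (a w b : nat -> R) m : a 0%N != 0 ->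
  (forall j, (j <= m)%N -> fps_mul a w j = b j) -> fps_mul (fps_inv a) b m = w m.
Proof.
move=> ha hb.
have hbN : eqN m.+1 (trp m.+1 b) (trp m.+1 a * trp m.+1 w).
  by move=> i hi; rewrite coef_poly hi -hb // -fps_mul_poly.
have hi : eqN m.+1 (trp m.+1 a * trp m.+1 (fps_inv a)) 1.
  by move=> i hi; rewrite -fps_mul_poly // fps_mul_inv // coef1.
rewrite (@fps_mul_poly m.+1) // (eqN_mul (eqN_refl _) hbN) //.
rewrite mulrA (mulrC (trp m.+1 (fps_inv a))) (eqN_mul hi (eqN_refl _)) //.
by rewrite mul1r coef_poly ltnSn.
Qed.

End Inv.

Section Stir.
Variable R : realType.
Variable lam : R.
Variable S2 : nat -> nat -> R.
Hypothesis hS2 : forall (m : nat) (x : R), dfall x lam m = \sum_(k < m.+1) S2 m k * fall x k.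

Definition S n k := if (k <= n)%N then S2 n k else 0.

Lemma S_out n k : (n < k)%N -> S n k = 0.
Proof. by move=> h; rewrite /S leqNgt h. Qed.

Lemma hS2K m K x : (m < K)%N -> dfall x lam m = \sum_(k < K) S m k * fall x k.
Proof.
move=> hK; rewrite (@sum_ext _ K m (fun k => S m k * fall x k) hK); last first.
  by move=> k hk; rewrite S_out // mul0r.
rewrite hS2; apply: eq_bigr => [[i hi]] _ /=; by rewrite /S -ltnS hi.
Qed.

Lemma S_n0 n : S n 0 = (n == 0%N)%:R.
Proof.
have := @hS2K n n.+1 0 (ltnSn n); rewrite big_ord_recl /= fall0 mulr1 big1 ?addr0.
  case: n => [|n]; first by rewrite dfall0.
  by rewrite dfall0S.
by move=> i _; rewrite /bump add1n fallSl mul0r mulr0.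
Qed.

Lemma S_rec n k : S n.+1 k.+1 = S n k + (k.+1%:R - n%:R * lam) * S n k.+1.
Proof.
case: (leqP k n) => hk; last first.
  by rewrite (@S_out n.+1 k.+1) ?(@S_out n k) ?(@S_out n k.+1) ?mulr0 ?addr0 // ltnW.
pose c := fun k => S n.+1 k - (if k is k'.+1 then S n k' else 0) - (k%:R - n%:R * lam) * S n k.
have H : forall x, \sum_(k < n.+2) c k * fall x k = 0.
  move=> x.
  have e1 : \sum_(k < n.+2) c k * fall x k = \sum_(k < n.+2) S n.+1 k * fall x k
     - \sum_(k < n.+2) (if nat_of_ord k is k'.+1 then S n k' else 0) * fall x k
     - \sum_(k < n.+2) (k%:R - n%:R * lam) * S n k * fall x k.
    rewrite -!sumrB; apply: eq_bigr => i _; by rewrite /c /= !mulrBl.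
  rewrite e1 -hS2K // dfallS (@hS2K n n.+2) // mulr_suml.
  rewrite [X in _ - X - _]big_ord_recl /= mul0r add0r.
  rewrite big_ord_recr [X in _ - _ - X]big_ord_recr /= !(S_out (ltnSn n)) !mul0r !mulr0 !mul0r !addr0.
  rewrite -!sumrB big1 // => i _; rewrite /bump /= add0n add1n fallS; ring.
have hk2 : (k.+1 < n.+2)%N by rewrite ltnS ltnS.
have := fall_indep H hk2; rewrite /c /= => h.
apply/eqP; rewrite -subr_eq0; apply/eqP; rewrite -[RHS]h; ring.
Qed.

Lemma S_conv n k : (k < n.+2)%N ->
  \sum_(i < n.+1) 'C(n, i)%:R * dfall 1 lam (n - i) * S i k = S n k + k.+1%:R * S n k.+1.
Proof.
move=> hk.
pose c := fun k => \sum_(i < n.+1) 'C(n, i)%:R * dfall 1 lam (n - i) * S i k - S n k - k.+1%:R * S n k.+1.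
have H : forall x, \sum_(k < n.+2) c k * fall x k = 0.
  move=> x.
  have e1 : \sum_(k < n.+2) c k * fall x k =
     \sum_(k < n.+2) (\sum_(i < n.+1) 'C(n, i)%:R * dfall 1 lam (n - i) * S i k) * fall x k
     - \sum_(k < n.+2) S n k * fall x k
     - \sum_(k < n.+2) k.+1%:R * S n k.+1 * fall x k.
    by rewrite -!sumrB; apply: eq_bigr => i _; rewrite /c /= !mulrBl.
  have e2 : \sum_(k < n.+2) (\sum_(i < n.+1) 'C(n, i)%:R * dfall 1 lam (n - i) * S i k) * fall x k
      = \sum_(k < n.+2) S n k * fall (x + 1) k.
    rewrite -(@hS2K n n.+2 (x + 1)) // vandermonde.
    under eq_bigr => j _ do rewrite mulr_suml.
    rewrite exchange_big /=; apply: eq_bigr => i _.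
    have hi : (i < n.+2)%N by rewrite ltnS ltnW.
    rewrite (@hS2K i n.+2 x hi) mulrAC mulr_sumr; apply: eq_bigr => j _.
    by rewrite !mulrA.
  rewrite e1 e2 big_ord_recl [X in _ - X - _]big_ord_recl [X in _ - _ - X]big_ord_recr /=.
  rewrite (@S_out n n.+2) // mulr0 mul0r addr0 !fall0.
  rewrite /bump /=.
  have -> : forall a s1 s2 s3 : R, a + s1 - (a + s2) - s3 = s1 - s2 - s3 by move=> *; ring.
  rewrite -sumrB -sumrB big1 // => i _.
  rewrite ?add1n fall_shift; ring.
have := fall_indep H hk; rewrite /c /= => h.
apply/eqP; rewrite -subr_eq0; apply/eqP; rewrite -[RHS]h; ring.
Qed.

Hypothesis hlam : lam != 0.

Definition cc k := (k.-1)`!%:R * (-1) ^+ (k.-1) * dharm (- lam) k.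
Definition dd k := (- lam)^-1 * fall (- lam) k.+1 / k.+1%:R.

Lemma dharm0 (mu : R) : dharm mu 0 = 0.
Proof. by rewrite /dharm big_geq. Qed.

Lemma dharmS (mu : R) k : dharm mu k.+1 = dharm mu k + mu^-1 * rbinom mu k.+1 * (-1) ^+ k.
Proof. by rewrite /dharm big_nat_recr. Qed.

Lemma cc0 : cc 0 = 0.
Proof. by rewrite /cc dharm0 mulr0. Qed.

Lemma cc_dd k : cc k.+1 + k%:R * cc k = dd k.
Proof.
have h1 : k%:R * cc k = - (k`!%:R * (-1) ^+ k * dharm (- lam) k).
  case: k => [|k]; first by rewrite cc0 dharm0 !mulr0 oppr0.
  by rewrite /cc /= factS natrM exprS; ring.
rewrite h1 /cc /= dharmS /rbinom /dd factS natrM.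
have hf : k`!%:R != 0 :> R by rewrite pnatr_eq0 -lt0n fact_gt0.
have hk : k.+1%:R != 0 :> R by rewrite pnatr_eq0.
have hs : (-1) ^+ k * (-1) ^+ k = 1 :> R by rewrite -expr2 -exprM mulnC exprM sqrrN !expr1n.
field: hs; by rewrite hlam hf addrC natr1 pnatr_eq0.
Qed.

Definition Rr n := \sum_(k < n.+1) cc k * S n k.
Definition Uu n := \sum_(k < n.+1) dd k * S n k.

Lemma R_rec n : Rr n.+1 = Uu n - n%:R * lam * Rr n.
Proof.
rewrite /Rr /Uu big_ord_recl /= cc0 mul0r add0r.
under eq_bigr => i _ do rewrite /bump /= add1n S_rec mulrDr.
rewrite big_split /=.
pose g := fun j => cc j * (j%:R - n%:R * lam) * S n j.
have hg : \sum_(i < n.+1) g i.+1 = \sum_(i < n.+1) g i.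
  have g0 : g 0%N = 0 by rewrite /g cc0 !mul0r.
  have gn : g n.+1 = 0 by rewrite /g S_out // mulr0.
  have e1 : \sum_(i < n.+2) g i = \sum_(i < n.+1) g i.+1.
    by rewrite big_ord_recl g0 add0r.
  have e2 : \sum_(i < n.+2) g i = \sum_(i < n.+1) g i.
    by rewrite big_ord_recr /= gn addr0.
  by rewrite -e1 e2.
have e3 : \sum_(i < n.+1) cc i.+1 * ((i.+1%:R - n%:R * lam) * S n i.+1) = \sum_(i < n.+1) g i.+1.
  by apply: eq_bigr => i _; rewrite /g; ring.
rewrite e3 hg /g.
have -> : \sum_(k < n.+1) dd k * S n k =
  \sum_(k < n.+1) cc k.+1 * S n k + \sum_(k < n.+1) k%:R * cc k * S n k.
  rewrite -big_split; apply: eq_bigr => i _ /=; rewrite -cc_dd; ring.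
rewrite mulr_sumr -addrA; congr (_ + _).
rewrite -sumrB; apply: eq_bigr => i _; ring.
Qed.

Lemma Uu_ext K n : (n < K)%N -> Uu n = \sum_(k < K) dd k * S n k.
Proof.
move=> hK; rewrite (@sum_ext _ K n (fun k => dd k * S n k) hK) //.
by move=> k hk; rewrite S_out // mulr0.
Qed.

Lemma U_conv n : \sum_(i < n.+1) 'C(n, i)%:R * dfall 1 lam (n - i) * Uu i - Uu n
  = (- lam)^-1 * (dfall (- lam) lam n - (n == 0%N)%:R).
Proof.
have e1 : \sum_(i < n.+1) 'C(n, i)%:R * dfall 1 lam (n - i) * Uu i =
   \sum_(k < n.+1) dd k * (S n k + k.+1%:R * S n k.+1).
  have hU : forall i : 'I_n.+1, Uu i = \sum_(k < n.+1) dd k * S i k.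
    by move=> i; apply: Uu_ext.
  under eq_bigr => i _ do rewrite hU mulr_sumr.
  rewrite exchange_big /=; apply: eq_bigr => k _.
  rewrite -S_conv; last by rewrite ltnS ltnW.
  rewrite mulr_sumr; apply: eq_bigr => i _; ring.
rewrite e1; under eq_bigr => k _ do rewrite mulrDr.
rewrite big_split /= addrC addrK /Uu.
rewrite (@hS2K n n.+2 (- lam)) // [in RHS]big_ord_recl /= fall0 mulr1 S_n0 (addrC (n == 0%N)%:R) addrK.
rewrite mulr_sumr; apply: eq_bigr => i _; rewrite /bump /= add1n /dd.
field; by rewrite hlam addrC natr1 pnatr_eq0.
Qed.

Definition Pz N z := egf N (fun i => dfall z lam i).

Lemma Pz_mul N z w : eqN N (Pz N z * Pz N w) (Pz N (z + w)).
Proof. by move=> i hi; rewrite coef_egfM // coef_poly hi vandermonde. Qed.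

Lemma Pz0 N : eqN N (Pz N 0) 1.
Proof.
move=> i hi; rewrite coef_poly hi coef1.
case: i hi => [|i] hi; first by rewrite dfall0 divr1.
by rewrite dfall0S mul0r.
Qed.

Lemma Lmul N : eqN N ((1 + lam%:P * 'X) * Pz N (- lam)) 1.
Proof.
move=> i hi; rewrite mulrDl mul1r -mulrA coefD coefCM coefXM coef1 coef_poly hi.
case: i hi => [|j] hi /=; first by rewrite dfall0 divr1 mulr0 addr0.
rewrite coef_poly ltnW // dfallS factS natrM.
have := fact_neq0 R j; have hk : j.+1%:R != 0 :> R by rewrite pnatr_eq0.
move=> hf; rewrite -natr1; field.
by rewrite natr1 hk hf.
Qed.

Lemma hA N : eqN N (egf N Uu) ((1 + lam%:P * 'X) * egf N (fun i => Rr i.+1)).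
Proof.
move=> i hi; rewrite mulrDl mul1r -mulrA coefD coefCM coefXM !coef_poly hi.
case: i hi => [|j] hi /=; first by rewrite mulr0 addr0 R_rec mul0r mul0r subr0.
rewrite (ltnW hi) R_rec factS natrM.
have := fact_neq0 R j; have hk : j.+1%:R != 0 :> R by rewrite pnatr_eq0.
move=> hf; rewrite -natr1; field.
by rewrite natr1 hk hf.
Qed.

Lemma hB N : eqN N (egf N Uu * (Pz N 1 - 1)) (((- lam)^-1)%:P * (Pz N (- lam) - 1)).
Proof.
move=> i hi; rewrite mulrBr mulr1 coefB coef_egfM // coefCM coefB coef1 !coef_poly hi.
have U := U_conv i.
have e : \sum_(k < i.+1) 'C(i, k)%:R * Uu k * dfall 1 lam (i - k) =
         \sum_(k < i.+1) 'C(i, k)%:R * dfall 1 lam (i - k) * Uu k.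
  by apply: eq_bigr => k _; ring.
rewrite e; move/eqP: U; rewrite subr_eq => /eqP ->.
have := fact_neq0 R i => hf.
case: i {hi e} hf => [|i] hf /=.
  rewrite !divr1; field; exact: hlam.
rewrite !subr0; field.
by rewrite hf hlam.
Qed.

Lemma chain N : eqN N (egf N (fun i => Rr i.+1) * (1 - Pz N (-1)))
                       ('X * Pz N (- (2 * lam + 1))).
Proof.
set P := egf N (fun i => Rr i.+1).
set L := 1 + lam%:P * 'X.
set G := Pz N (- lam).
set E1 := Pz N 1.
set Em := Pz N (-1).
have hL : eqN N (L * G) 1 := @Lmul N.
have s1 : eqN N (P * (E1 - 1)) ('X * G * G).
  apply: (eqN_trans (eqN_eq (esym (mulr1 (P * (E1 - 1)))))).
  apply: (eqN_trans (eqN_mul (eqN_refl (P * (E1 - 1))) (eqN_sym hL))).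
  rewrite (_ : P * (E1 - 1) * (L * G) = (L * P) * (E1 - 1) * G); last by ring.
  apply: (eqN_trans (eqN_mul (eqN_mul (eqN_sym (@hA N)) (eqN_refl _)) (eqN_refl G))).
  apply: (eqN_trans (eqN_mul (@hB N) (eqN_refl G))).
  have hG1 : eqN N (G - 1) (- (lam%:P * 'X * G)).
    apply: (eqN_trans (eqN_add (eqN_refl G) (eqN_opp (eqN_sym hL)))).
    by apply: eqN_eq; rewrite /L; ring.
  apply: (eqN_trans (eqN_mul (eqN_mul (eqN_refl _) hG1) (eqN_refl G))).
  apply: eqN_eq.
  have hmu : ((- lam)^-1)%:P * lam%:P = -1 :> {poly R}.
    by rewrite -polyCM invrN mulNr mulVf // polyCN.
  rewrite (_ : ((- lam)^-1)%:P * - (lam%:P * 'X * G) * G = - (((- lam)^-1)%:P * lam%:P) * 'X * G * G); last by ring.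
  by rewrite hmu opprK mul1r.
have hE : eqN N (E1 * Em) 1.
  apply: (eqN_trans (@Pz_mul N 1 (-1))); rewrite addrN; exact: Pz0.
have s2 : eqN N (P * (1 - Em)) (P * (E1 - 1) * Em).
  rewrite (_ : P * (1 - Em) = P * (E1 - 1) * Em + P * (1 - E1 * Em)); last by ring.
  rewrite -[X in eqN _ _ X]addr0; apply: eqN_add (eqN_refl _) _.
  apply: (eqN_trans (eqN_mul (eqN_refl P) (eqN_add (eqN_refl 1) (eqN_opp hE)))).
  by apply: eqN_eq; rewrite subrr mulr0.
apply: (eqN_trans s2).
apply: (eqN_trans (eqN_mul s1 (eqN_refl Em))).
rewrite (_ : 'X * G * G * Em = 'X * (G * G * Em)); last by ring.
apply: eqN_mul (eqN_refl _) _.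
apply: (eqN_trans (eqN_mul (@Pz_mul N (- lam) (- lam)) (eqN_refl Em))).
apply: (eqN_trans (@Pz_mul N _ _)).
rewrite (_ : - lam + - lam + -1 = - (2 * lam + 1)); last by ring.
exact: eqN_refl.
Qed.

Lemma dfall_neg (y mu : R) k : dfall y (- mu) k = (-1) ^+ k * dfall (- y) mu k.
Proof.
elim: k => [|k IH]; first by rewrite !dfall0 expr0 mul1r.
by rewrite !dfallS IH exprS; ring.
Qed.

Lemma AWB m : fps_mul (edeg1_div_t (- lam)) (fun j => (-1) ^+ j * Rr j.+1 / j`!%:R) m
   = edeg (- lam) (2 * lam + 1) m.
Proof.
set N := m.+2.
set P := egf N (fun i => Rr i.+1).
set Q := \poly_(i < N) (dfall (-1) lam i.+1 / i.+1`!%:R).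
have hQ : eqN N ('X * Q) (Pz N (-1) - 1).
  move=> i hi; rewrite coefXM coefB coef1 !coef_poly hi.
  case: i hi => [|i] hi /=; first by rewrite dfall0 divr1 subrr.
  by rewrite (ltnW hi) subr0.
have hc := @chain N.
have h2 : eqN N ('X * (P * Q)) (- ('X * Pz N (- (2 * lam + 1)))).
  rewrite mulrCA.
  apply: (eqN_trans (eqN_mul (eqN_refl P) hQ)).
  apply: (eqN_trans _ (eqN_opp hc)).
  by apply: eqN_eq; rewrite /P; ring.
have h3 := h2 m.+1 (ltnSn m.+1).
rewrite coefXM coefN coefXM /= in h3.
rewrite coef_poly ltnW // in h3.
move: h3; rewrite coefM => h3.
rewrite fps_mul_comm /fps_mul /edeg1_div_t /edeg dfall_neg.
have -> : \sum_(i < m.+1) (-1) ^+ i * Rr i.+1 / i`!%:R *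
    (dfall 1 (- lam) (m - i).+1 / (m - i).+1`!%:R) =
   - (-1) ^+ m * \sum_(j < m.+1) P`_j * Q`_(m - j).
  rewrite mulr_sumr; apply: eq_bigr => [[i hi]] _ /=.
  rewrite !coef_poly.
  have h1 : (i < N)%N by rewrite /N ltnS ltnW.
  have h4 : (m - i < N)%N by rewrite /N ltnS ltnW // ltnS leq_subr.
  rewrite h1 h4 dfall_neg.
  have hs : (-1) ^+ i * (-1) ^+ (m - i).+1 = - (-1) ^+ m :> R.
    by rewrite -exprD addnS subnKC // exprS mulN1r.
  rewrite -hs; ring.
rewrite h3.
ring.
Qed.

End Stir.

Theorem theorem9 (R : realType) (lam : R) (n : nat) (S2 : nat -> nat -> R)
  (hS2 : forall (m : nat) (x : R),
      dfall x lam m = \sum_(k < m.+1) S2 m k * fall x k)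
  (hlam : lam != 0) (hn : (0 < n)%N) :
  dbern (- lam) (2 * lam + 1) n.-1 =
  \sum_(1 <= k < n.+1)
     (k.-1)`!%:R * (-1) ^+ (n - k) * dharm (- lam) k * S2 n k.
Proof.
rewrite /dbern (inv_solve (w := fun j => (-1) ^+ j * Rr lam S2 j.+1 / j`!%:R)).
- case: n hn => [|n] // _ /=.
  have hf := fact_neq0 R n.
  have -> : n`!%:R * ((-1) ^+ n * Rr lam S2 n.+1 / n`!%:R) = (-1) ^+ n * Rr lam S2 n.+1.
    by field.
  rewrite /Rr big_ord_recl /= cc0 mul0r add0r big_add1 /= big_mkord mulr_sumr.
  apply: eq_bigr => [[k hk]] _ /=; rewrite /bump /= add1n subSS.
  have hk' : (k <= n)%N by [].
  rewrite /S ltnS hk' /cc /=.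
  rewrite -{1}(subnK hk') exprD.
  have hs : (-1) ^+ k * (-1) ^+ k = 1 :> R by rewrite -expr2 -exprM mulnC exprM sqrrN !expr1n.
  rewrite (_ : (-1) ^+ (n - k) * (-1) ^+ k * ((k`!)%:R * (-1) ^+ k * dharm (- lam) k.+1 * S2 n.+1 k.+1)
     = (-1) ^+ (n - k) * ((-1) ^+ k * (-1) ^+ k) * ((k`!)%:R * dharm (- lam) k.+1 * S2 n.+1 k.+1)); last by ring.
  rewrite hs; ring.
- by rewrite /edeg1_div_t /edeg dfallS dfall0 mul0r subr0 mul1r divr1 oner_eq0.
- by move=> j _; apply: AWB.
Qed.
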